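(* Let $(X,f)$ be a dynamical system. Then $(X,f)$ is multi-minimal if and only if $(X,f^r)$ is multi-minimal for every $r\in\mathbb{N}$.
   Context: A dynamical system is a pair $(X,f)$ with $X$ a compact metric space and $f:X\to X$ continuous. A system is minimal if it has no proper non-empty closed invariant subset. $(X,f)$ is multi-minimal if for every $n\in\mathbb{N}$ the system $(X^n,f\times f^2\times\dots\times f^n)$ is minimal. *)

(* Defs.v *)
From Stdlib Require Import Reals List.
Open Scope R_scope.

Record MetricSpace := {
  mcarrier :> Type;
  mdist : mcarrier -> mcarrier -> R;
  mdist_nonneg : forall x y, 0 <= mdist x y;
  mdist_eq0 : forall x y, mdist x y = 0 <-> x = y;
  mdist_sym : forall x y, mdist x y = mdist y x;
  mdist_tri : forall x y z, mdist x z <= mdist x y + mdist y z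
}.

Arguments mdist {m}.

Definition is_open {X : MetricSpace} (U : X -> Prop) : Prop :=
  forall x, U x -> exists eps, 0 < eps /\ forall y, mdist x y < eps -> U y.

Definition compact (X : MetricSpace) : Prop :=
  forall (I : Type) (U : I -> X -> Prop),
    (forall i, is_open (U i)) ->
    (forall x, exists i, U i x) ->
    exists l : list I, forall x, exists i, In i l /\ U i x.

Definition continuous {X : MetricSpace} (f : X -> X) : Prop :=
  forall x eps, 0 < eps -> exists delta, 0 < delta /\
    forall y, mdist x y < delta -> mdist (f x) (f y) < eps.

Definition dynamical_system (X : MetricSpace) (f : X -> X) : Prop :=
  compact X /\ continuous f.

Definition iterate {X : Type} (r : nat) (f : X -> X) : X -> X := Nat.iter r f.

(* The n-fold product X^n, coordinates indexed by i = 0, ..., n-1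
   (coordinate i corresponds to the paper's coordinate i+1). *)
Definition power (n : nat) (X : Type) : Type := {i : nat | (i < n)%nat} -> X.

Definition multi_map {X : Type} (n : nat) (f : X -> X) : power n X -> power n X :=
  fun x i => iterate (S (proj1_sig i)) f (x i).

(* Closed subsets of X^n for the product topology (equivalently, the max metric). *)
Definition closed_power {X : MetricSpace} (n : nat) (A : power n X -> Prop) : Prop :=
  forall x, ~ A x -> exists eps, 0 < eps /\
    forall y : power n X, (forall i, mdist (x i) (y i) < eps) -> ~ A y.

Definition minimal_power {X : MetricSpace} (n : nat) (F : power n X -> power n X) : Prop :=
  forall A : power n X -> Prop,
    closed_power n A ->
    (exists x, A x) ->
    (forall x, A x -> A (F x)) ->
    forall x, A x.

Definition multi_minimal (X : MetricSpace) (f : X -> X) : Prop :=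
  forall n : nat, (1 <= n)%nat -> minimal_power n (multi_map n f).

(* Main.v *)
Require Import Defs.
From Stdlib Require Import Reals List.
From Stdlib Require Import Arith Lia FunctionalExtensionality.
Local Open Scope nat_scope.

Lemma iter_add_l {T} (f : T -> T) a b z :
  iterate (a + b) f z = iterate a f (iterate b f z).
Proof. unfold iterate; induction a; simpl; congruence. Qed.

Lemma iter_mul {T} (f : T -> T) r k z :
  iterate k (iterate r f) z = iterate (k * r) f z.
Proof.
  induction k; [reflexivity|].
  change (iterate (S k) (iterate r f) z) with (iterate r f (iterate k (iterate r f) z)).
  rewrite IHk, <- iter_add_l. reflexivity.
Qed.

Lemma sig_eq n a b (pa : a < n) (pb : b < n) :
  a = b -> exist (fun i => i < n) a pa = exist (fun i => i < n) b pb.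
Proof. intros ->. f_equal. apply Peano_dec.le_unique. Qed.

Lemma idx_lt n r i : (1 <= r)%nat -> i < n -> r * S i - 1 < n * r.
Proof. intros; nia. Qed.

Lemma div_lt n r j : (1 <= r)%nat -> j < n * r -> j / r < n.
Proof. intros. apply Nat.Div0.div_lt_upper_bound; nia. Qed.

Definition proj_idx n r (Hr : (1 <= r)%nat) (i : {i : nat | i < n}) : {j : nat | j < n * r} :=
  exist _ (r * S (proj1_sig i) - 1) (idx_lt n r (proj1_sig i) Hr (proj2_sig i)).

Definition piX {X : Type} n r Hr (x : power (n * r) X) : power n X :=
  fun i => x (proj_idx n r Hr i).

Definition secX {X : Type} n r (Hr : (1 <= r)%nat) (y : power n X) : power (n * r) X :=
  fun j => y (exist _ (proj1_sig j / r) (div_lt n r (proj1_sig j) Hr (proj2_sig j))).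

Lemma pi_sec {X : Type} n r Hr (y : power n X) : piX n r Hr (secX n r Hr y) = y.
Proof.
  apply functional_extensionality; intros [i Hi].
  unfold piX, secX, proj_idx; simpl. f_equal. apply sig_eq.
  symmetry. apply (Nat.div_unique _ _ _ (r - 1)); nia.
Qed.

Lemma pi_comm {X : Type} n r Hr (f : X -> X) (x : power (n * r) X) :
  piX n r Hr (multi_map (n * r) f x) = multi_map n (iterate r f) (piX n r Hr x).
Proof.
  apply functional_extensionality; intros [i Hi].
  unfold piX, multi_map, proj_idx. cbn [proj1_sig]. rewrite iter_mul.
  replace (S (r * S i - 1)) with (S i * r) by nia. reflexivity.
Qed.

Theorem proposition6p2 (X : MetricSpace) (f : X -> X) :
  dynamical_system X f ->
  (multi_minimal X f <->
   forall r : nat, (1 <= r)%nat -> multi_minimal X (iterate r f)).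
Proof.
  intros _. split.
  - intros Hmin r Hr n Hn A Hcl [y0 Hy0] Hinv.
    assert (HB : forall x, A (piX n r Hr x)).
    { apply (Hmin (n * r) ltac:(nia) (fun x => A (piX n r Hr x))).
      + intros x nB. destruct (Hcl _ nB) as [e [He H]].
        exists e; split; auto. intros y Hy. apply H. intros i. apply Hy.
      + exists (secX n r Hr y0). rewrite pi_sec. exact Hy0.
      + intros x Bx. rewrite pi_comm. apply Hinv. exact Bx. }
    intros y. rewrite <- (pi_sec n r Hr y). apply HB.
  - intros Hall n Hn.
    assert (E : multi_map n (iterate 1 f) = multi_map n f).
    { apply functional_extensionality; intros x.
      apply functional_extensionality; intros i.
      unfold multi_map. rewrite iter_mul. rewrite Nat.mul_1_r. reflexivity. }
    rewrite <- E. apply Hall; auto.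
Qed.
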